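(* Let $\gamma=(1+\sqrt5)/2$ and let $(\mathbf{w}_i)_{i\ge0}$ be a Fibonacci sequence in $\mathrm{GL}_2(\mathbb{R})$ (i.e. $\mathbf{w}_{i+2}=\mathbf{w}_{i+1}\mathbf{w}_i$). Suppose there are real $c_1,c_2>0$ with $c_1\|\mathbf{w}_i\|\|\mathbf{w}_{i+1}\|\le\|\mathbf{w}_{i+2}\|\le c_2\|\mathbf{w}_i\|\|\mathbf{w}_{i+1}\|$ for all $i\ge0$. Then there are constants $c_3,c_4>0$ such that for all $i\ge0$, $c_3\|\mathbf{w}_i\|^\gamma\le\|\mathbf{w}_{i+1}\|\le c_4\|\mathbf{w}_i\|^\gamma$ and $c_3|\det(\mathbf{w}_i)|^\gamma\le|\det(\mathbf{w}_{i+1})|\le c_4|\det(\mathbf{w}_i)|^\gamma$. Moreover, if $\alpha,\beta\ge0$ are such that $(c_2\|\mathbf{w}_i\|)^\alpha\le|\det(\mathbf{w}_i)|\le(c_1\|\mathbf{w}_i\|)^\beta$ holds for $i=0$ and $i=1$, then it holds for every $i\ge0$.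
   Context: For a $2\times2$ real matrix $\mathbf{w}$, $\|\mathbf{w}\|$ denotes the largest absolute value of its coefficients. *)

(* Defs.v *)
From HB Require Import structures.
From mathcomp Require Import all_boot all_order all_algebra.
From mathcomp Require Import all_classical all_reals all_analysis.
Set Implicit Arguments. Unset Strict Implicit. Unset Printing Implicit Defensive.
Import Order.TTheory GRing.Theory Num.Theory.
Local Open Scope ring_scope.

Definition mxnorm2 (R : realType) (w : 'M[R]_2) : R :=
  \big[Num.max/0]_(ij : 'I_2 * 'I_2) `|w ij.1 ij.2|.

Definition golden (R : realType) : R := (1 + Num.sqrt 5) / 2.

(* Main.v *)
Require Import Defs.
From HB Require Import structures.
From mathcomp Require Import all_boot all_order all_algebra.
From mathcomp Require Import all_classical all_reals all_analysis.
From mathcomp Require Import ring lra.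
Import Order.TTheory GRing.Theory Num.Theory.
Local Open Scope ring_scope.

Section Aux.
Variable R : realType.

Lemma golden_facts : 1 < golden R < 2 /\ golden R * (golden R - 1) = 1.
Proof.
have s0 : 0 <= Num.sqrt (5 : R) by apply: sqrtr_ge0.
have s2 : Num.sqrt (5:R) ^+ 2 = 5 by rewrite sqr_sqrtr.
rewrite /golden; move: s0 s2; set s := Num.sqrt _ => s0 s2.
have s2' : s * s = 5 by rewrite -expr2.
split; last by rewrite -[LHS]/((1+s)/2 * ((1+s)/2 - 1)); nra.
apply/andP; split; nra.
Qed.

Lemma fib_log (a e : nat -> R) (E : R) :
  (forall i, `|e i| <= E) -> (forall i, a i.+2 = a i + a i.+1 + e i) ->
  exists B, forall i, `|a i.+1 - golden R * a i| <= B.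
Proof.
move=> hE ha.
have [/andP [g1 g2] gq] := golden_facts.
set g := golden R in g1 g2 gq *.
set b := fun i => a i.+1 - g * a i.
have E0 : 0 <= E by apply: le_trans (hE 0%N).
have rec i : b i.+1 = e i - (g - 1) * b i.
  rewrite /b /= ha.
  have h : a i = g * (g - 1) * a i by rewrite gq mul1r.
  transitivity (g * (g - 1) * a i + a i.+1 + e i - g * a i.+1); first by rewrite -h.
  ring.
exists (`|b 0%N| + E / (2 - g)) => i.
elim: i => [|i IH].
  rewrite -/(b 0%N); have : 0 <= E / (2 - g) by apply: divr_ge0; lra.
  lra.
rewrite -/(b i.+1) rec.
have q0 : 0 <= g - 1 by lra.
have h1 : `|e i - (g - 1) * b i| <= `|e i| + (g - 1) * `|b i|.
  by apply: le_trans (ler_normB _ _) _; rewrite normrM (ger0_norm q0).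
have h2 : (g - 1) * `|b i| <= (g - 1) * (`|b 0%N| + E / (2 - g)).
  by apply: ler_wpM2l.
have h3 : E + (g - 1) * (E / (2 - g)) = E / (2 - g).
  by field; lra.
have h4 : 0 <= `|b 0%N| by [].
have h5 : (g - 1) * `|b 0%N| <= `|b 0%N| by nra.
move: (hE i) => hEi.
lra.
Qed.

Lemma conv_pow (x y B g : R) : 0 < x -> 0 < y ->
  `|ln y - g * ln x| <= B ->
  expR (- B) * x `^ g <= y <= expR B * x `^ g.
Proof.
move=> x0 y0; rewrite ler_norml => /andP [h1 h2].
have ey : y = expR (ln y) by rewrite lnK // posrE.
rewrite /powR (gt_eqF x0) -!expRD; apply/andP; split.
  by rewrite [X in _ <= X]ey ler_expR; lra.
by rewrite [X in X <= _]ey ler_expR; lra.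
Qed.

Lemma mxnorm2_ge (w : 'M[R]_2) i j : `|w i j| <= mxnorm2 w.
Proof. exact: (le_bigmax _ (fun ij : 'I_2 * 'I_2 => `|w ij.1 ij.2|) (i, j)). Qed.

Lemma mxnorm2_gt0 (w : 'M[R]_2) : w \in unitmx -> 0 < mxnorm2 w.
Proof.
move=> wu; rewrite lt_neqAle; apply/andP; split; last first.
  exact: le_trans (normr_ge0 _) (mxnorm2_ge w ord0 ord0).
apply/negP => /eqP h0.
have : w = 0.
  apply/matrixP => i j; rewrite mxE; apply/eqP; rewrite -normr_le0 h0.
  exact: mxnorm2_ge.
by move=> w0; move: wu; rewrite w0 unitmxE det0 unitr0.
Qed.

End Aux.

Theorem proposition5p3 (R : realType) (w : nat -> 'M[R]_2) (c1 c2 : R) :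
  (forall i, w i \in unitmx) ->
  (forall i, w i.+2 = w i.+1 *m w i) ->
  0 < c1 -> 0 < c2 ->
  (forall i, c1 * mxnorm2 (w i) * mxnorm2 (w i.+1) <= mxnorm2 (w i.+2)
             <= c2 * mxnorm2 (w i) * mxnorm2 (w i.+1)) ->
  (exists c3 c4 : R, 0 < c3 /\ 0 < c4 /\
     forall i,
       (c3 * mxnorm2 (w i) `^ golden R <= mxnorm2 (w i.+1)
          <= c4 * mxnorm2 (w i) `^ golden R) /\
       (c3 * `|\det (w i)| `^ golden R <= `|\det (w i.+1)|
          <= c4 * `|\det (w i)| `^ golden R)) /\
  (forall alpha beta : R, 0 <= alpha -> 0 <= beta ->
     (forall i, (i <= 1)%N ->
        (c2 * mxnorm2 (w i)) `^ alpha <= `|\det (w i)| <= (c1 * mxnorm2 (w i)) `^ beta) ->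
     forall i,
        (c2 * mxnorm2 (w i)) `^ alpha <= `|\det (w i)| <= (c1 * mxnorm2 (w i)) `^ beta).
Proof.
move=> wu wrec c10 c20 hN.
set N := fun i => mxnorm2 (w i).
set D := fun i => `|\det (w i)|.
have N0 i : 0 < N i by apply: mxnorm2_gt0.
have D0 i : 0 < D i.
  rewrite /D normr_gt0; apply/negP => /eqP d0.
  by move: (wu i); rewrite unitmxE d0 unitr0.
have Drec i : D i.+2 = D i * D i.+1.
  by rewrite /D wrec det_mulmx normrM mulrC.
split.
  have [BN HBN] : exists B, forall i, `|ln (N i.+1) - golden R * ln (N i)| <= B.
    apply: (@fib_log R (fun i => ln (N i))
       (fun i => ln (N i.+2) - ln (N i) - ln (N i.+1)) (`|ln c1| + `|ln c2|)); last first.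
      by move=> i; ring.
    move=> i.
    have /andP [l1 l2] := hN i.
    have e1 : ln (c1 * N i * N i.+1) = ln c1 + ln (N i) + ln (N i.+1).
      by rewrite !lnM ?posrE ?mulr_gt0.
    have e2 : ln (c2 * N i * N i.+1) = ln c2 + ln (N i) + ln (N i.+1).
      by rewrite !lnM ?posrE ?mulr_gt0.
    have m1 : ln (c1 * N i * N i.+1) <= ln (N i.+2).
      by rewrite ler_ln ?posrE ?mulr_gt0.
    have m2 : ln (N i.+2) <= ln (c2 * N i * N i.+1).
      by rewrite ler_ln ?posrE ?mulr_gt0.
    have n1 := ler_norm (ln c2); have n2 := ler_norm (- ln c1).
    rewrite normrN in n2.
    have n3 := normr_ge0 (ln c1); have n4 := normr_ge0 (ln c2).
    rewrite ler_norml; apply/andP; split; lra.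
  have [BD HBD] : exists B, forall i, `|ln (D i.+1) - golden R * ln (D i)| <= B.
    apply: (@fib_log R (fun i => ln (D i)) (fun=> 0) 0).
      by move=> i; rewrite normr0.
    by move=> i; rewrite Drec lnM ?posrE // addr0.
  exists (expR (- Num.max BN BD)), (expR (Num.max BN BD)).
  split; first exact: expR_gt0.
  split; first exact: expR_gt0.
  move=> i; split.
    apply: conv_pow (N0 _) (N0 _) _.
    by apply: le_trans (HBN i) _; rewrite le_max lexx.
  apply: conv_pow (D0 _) (D0 _) _.
  by apply: le_trans (HBD i) _; rewrite le_max lexx orbT.
move=> al be al0 be0 h01.
suff H : forall i, (c2 * N i) `^ al <= D i <= (c1 * N i) `^ be /\
                   (c2 * N i.+1) `^ al <= D i.+1 <= (c1 * N i.+1) `^ be.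
  by move=> i; case: (H i).
elim=> [|i [IH1 IH2]]; first by split; apply: h01.
split=> //.
move/andP: IH1 => [a1 a2]; move/andP: IH2 => [b1 b2].
have /andP [l1 l2] := hN i.
rewrite -/(N i) -/(N i.+1) -/(N i.+2) in l1 l2.
have pN j : 0 <= N j := ltW (N0 j).
have hc1 : 0 <= c1 := ltW c10.
have hc2 : 0 <= c2 := ltW c20.
rewrite Drec; apply/andP; split.
  apply: le_trans (ler_pM (powR_ge0 _ _) (powR_ge0 _ _) a1 b1).
  rewrite -powRM; first last.
    by rewrite mulr_ge0 // ltW.
    by rewrite mulr_ge0 // ltW.
  apply: ge0_ler_powR => //; rewrite ?nnegrE ?mulr_ge0 ?pN //.
  have -> : c2 * N i * (c2 * N i.+1) = c2 * (c2 * N i * N i.+1) by ring.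
  by apply: ler_wpM2l.
apply: le_trans (ler_pM (ltW (D0 _)) (ltW (D0 _)) a2 b2) _.
rewrite -powRM; first last.
  by rewrite mulr_ge0 // ltW.
  by rewrite mulr_ge0 // ltW.
apply: ge0_ler_powR => //; rewrite ?nnegrE ?mulr_ge0 ?pN //.
have -> : c1 * N i * (c1 * N i.+1) = c1 * (c1 * N i * N i.+1) by ring.
by apply: ler_wpM2l.
Qed.
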